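(* Let $S$ be a numerical semigroup. If $S$ is telescopic, then $\mathrm{Ap}(S)$ is $\beta$-rectangular. The converse fails: $S=\langle 4,5,6\rangle$ has $\alpha$-rectangular (hence $\beta$-rectangular) Apéry set but is not telescopic.
   Context: A numerical semigroup is a submonoid $S$ of $(\mathbb N,+)$ with finite complement in $\mathbb N$; $g_1<\dots<g_\nu$ is its minimal system of generators, $m=g_1$, and $\mathrm{Ap}(S)=\{s\in S: s-m\notin S\}$. A representation of $s\in S$ is an expression $s=\sum_{i=1}^\nu\lambda_ig_i$, $\lambda_i\in\mathbb N$; $\mathrm{ord}(s)$ is the maximum of $\sum\lambda_i$ over all representations. For $i=2,\dots,\nu$: $\tau_i=\min\{h\in\mathbb N: hg_i\in\langle g_1,\dots,g_{i-1}\rangle\}-1$; $\alpha_i=\max\{h\in\mathbb N: hg_i\in\mathrm{Ap}(S)\}$; $\beta_i=\max\{h\in\mathbb N: hg_i\in\mathrm{Ap}(S),\ \mathrm{ord}(hg_i)=h\}$. $S$ is telescopic if $\mathrm{Ap}(S)=\{\sum_{i=2}^\nu\lambda_ig_i: 0\le\lambda_i\le\tau_i\}$. For $\delta\in\{\alpha,\beta\}$, $\mathrm{Ap}(S)$ is $\delta$-rectangular if $\mathrm{Ap}(S)=\{\sum_{i=2}^\nu\lambda_ig_i: 0\le\lambda_i\le\delta_i\}$. *)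

(* Defs.v *)
From mathcomp Require Import all_boot.
Set Implicit Arguments. Unset Strict Implicit. Unset Printing Implicit Defensive.

Definition numerical_semigroup (S : nat -> Prop) : Prop :=
  [/\ S 0, (forall a b, S a -> S b -> S (a + b)) & exists N, forall n, N <= n -> S n].

Definition gen (g : seq nat) (s : nat) : Prop :=
  exists lam : nat -> nat, s = \sum_(i < size g) lam i * nth 0 g i.

(* g = [:: g_1; ...; g_nu] (0-indexed in Rocq) is the minimal system of generators of S:
   strictly increasing, generates S, and no generator lies in the monoid generated by
   the other generators. *)
Definition min_gens (S : nat -> Prop) (g : seq nat) : Prop :=
  [/\ sorted ltn g,
      (forall s, S s <-> gen g s) &
      forall i, i < size g -> ~ gen (take i g ++ drop i.+1 g) (nth 0 g i)].

Definition mult (g : seq nat) : nat := nth 0 g 0.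

Definition Ap (S : nat -> Prop) (g : seq nat) (s : nat) : Prop :=
  S s /\ ~ (mult g <= s /\ S (s - mult g)).

Definition is_rep (g : seq nat) (lam : nat -> nat) (s : nat) : Prop :=
  s = \sum_(i < size g) lam i * nth 0 g i.
Definition rep_len (g : seq nat) (lam : nat -> nat) : nat := \sum_(i < size g) lam i.

Definition is_ord (g : seq nat) (s h : nat) : Prop :=
  (exists lam, is_rep g lam s /\ rep_len g lam = h) /\
  (forall lam, is_rep g lam s -> rep_len g lam <= h).

(* tau_i = t, with i the 0-based index of g_i (1 <= i < size g):
   t.+1 = min {h >= 1 : h g_i in <g_1,...,g_(i-1)>} *)
Definition is_tau (g : seq nat) (i t : nat) : Prop :=
  gen (take i g) (t.+1 * nth 0 g i) /\
  (forall h, 0 < h -> gen (take i g) (h * nth 0 g i) -> t.+1 <= h).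

Definition is_alpha (S : nat -> Prop) (g : seq nat) (i a : nat) : Prop :=
  Ap S g (a * nth 0 g i) /\ (forall h, Ap S g (h * nth 0 g i) -> h <= a).

Definition is_beta (S : nat -> Prop) (g : seq nat) (i b : nat) : Prop :=
  (Ap S g (b * nth 0 g i) /\ is_ord g (b * nth 0 g i) b) /\
  (forall h, Ap S g (h * nth 0 g i) -> is_ord g (h * nth 0 g i) h -> h <= b).

Definition box (g : seq nat) (d : nat -> nat) (s : nat) : Prop :=
  exists lam : nat -> nat,
    (forall i, 0 < i < size g -> lam i <= d i) /\
    s = \sum_(1 <= i < size g) lam i * nth 0 g i.

Definition Ap_equals_box (S : nat -> Prop) (g : seq nat) (d : nat -> nat) : Prop :=
  forall s, Ap S g s <-> box g d s.

Definition telescopic (S : nat -> Prop) (g : seq nat) : Prop :=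
  exists tau : nat -> nat,
    (forall i, 0 < i < size g -> is_tau g i (tau i)) /\ Ap_equals_box S g tau.

Definition alpha_rectangular (S : nat -> Prop) (g : seq nat) : Prop :=
  exists alpha : nat -> nat,
    (forall i, 0 < i < size g -> is_alpha S g i (alpha i)) /\ Ap_equals_box S g alpha.

Definition beta_rectangular (S : nat -> Prop) (g : seq nat) : Prop :=
  exists beta : nat -> nat,
    (forall i, 0 < i < size g -> is_beta S g i (beta i)) /\ Ap_equals_box S g beta.

(* Main.v *)
Require Import Defs.
From mathcomp Require Import all_boot zify.
Set Implicit Arguments. Unset Strict Implicit. Unset Printing Implicit Defensive.

Lemma sum0_nat a b (F : nat -> nat) :
  (forall j, a <= j < b -> F j = 0) -> \sum_(a <= j < b) F j = 0.
Proof.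
move=> H; rewrite big_seq_cond big1 // => j /andP[]; rewrite mem_index_iota => Hj _.
exact: H.
Qed.

Lemma sum_split3 a b i (F : nat -> nat) : a <= i < b ->
  \sum_(a <= j < b) F j = \sum_(a <= j < i) F j + F i + \sum_(i.+1 <= j < b) F j.
Proof.
case/andP=> Hai Hib; rewrite (big_cat_nat (n:=i)) //=; last exact: ltnW.
by rewrite -addnA (big_ltn (m:=i)) //.
Qed.

Lemma sum_ind a b i c (F : nat -> nat) : a <= i < b ->
  \sum_(a <= j < b) (if j == i then c else 0) * F j = c * F i.
Proof.
move=> Hi; rewrite (sum_split3 _ Hi) eqxx !sum0_nat ?add0n ?addn0 // => j /andP[H1 H2].
- by rewrite ifN //; apply/eqP => E; subst; rewrite ltnn in H1.
- by rewrite ifN //; apply/eqP => E; subst; rewrite ltnn in H2.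
Qed.

Lemma sum_le_mul a b (lam F : nat -> nat) : (forall j, a <= j < b -> 0 < F j) ->
  \sum_(a <= j < b) lam j <= \sum_(a <= j < b) lam j * F j.
Proof.
move=> H; rewrite big_seq_cond [X in _ <= X]big_seq_cond; apply: leq_sum => j.
case/andP; rewrite mem_index_iota => Hj _; rewrite leq_pmulr //; exact: H.
Qed.

Definition genk (g : seq nat) k x := exists lam, x = \sum_(0 <= j < k) lam j * nth 0 g j.

Lemma genk_take g k x : k <= size g -> gen (take k g) x <-> genk g k x.
Proof.
move=> Hk; rewrite /gen /genk size_takel //; split.
- case=> lam ->; exists lam; rewrite -(big_mkord xpredT (fun j => lam j * nth 0 (take k g) j)).
  by apply: eq_big_nat => j /andP[_ Hj]; rewrite nth_take.
- case=> lam ->; exists lam; rewrite -(big_mkord xpredT (fun j => lam j * nth 0 (take k g) j)).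
  by apply: eq_big_nat => j /andP[_ Hj]; rewrite nth_take.
Qed.

Lemma gen_genk g x : gen g x <-> genk g (size g) x.
Proof. by rewrite -genk_take // take_size. Qed.

Lemma genk_add g k x y : genk g k x -> genk g k y -> genk g k (x + y).
Proof.
case=> l1 -> [l2 ->]; exists (fun j => l1 j + l2 j); rewrite -big_split /=.
by apply: eq_bigr => j _; rewrite mulnDl.
Qed.

Lemma genk_mul g k c x : genk g k x -> genk g k (c * x).
Proof.
case=> l ->; exists (fun j => c * l j); rewrite big_distrr /=.
by apply: eq_bigr => j _; rewrite mulnA.
Qed.

Lemma genk_gen g k j c : j < k -> genk g k (c * nth 0 g j).
Proof. by move=> Hj; exists (fun l => if l == j then c else 0); rewrite sum_ind. Qed.

Lemma genk_mono g k1 k2 x : k1 <= k2 -> genk g k1 x -> genk g k2 x.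
Proof.
move=> Hk [l ->]; exists (fun j => if j < k1 then l j else 0).
rewrite [RHS](big_cat_nat (n:=k1)) //= [X in _ = _ + X]sum0_nat ?addn0.
- by apply: eq_big_nat => j /andP[_ ->].
- by move=> j /andP[H _]; rewrite ltnNge H.
Qed.

Lemma genk0 g x : genk g 0 x -> x = 0.
Proof. by case=> l ->; rewrite big_geq. Qed.
Record ctx (S : nat -> Prop) (g : seq nat) (tau : nat -> nat) : Prop := Ctx {
  c_sorted : sorted ltn g;
  c_gen : forall s, S s <-> gen g s;
  c_min : forall i, i < size g -> ~ gen (take i g ++ drop i.+1 g) (nth 0 g i);
  c_tau : forall i, 0 < i < size g -> is_tau g i (tau i);
  c_box : forall s, Ap S g s <-> box g tau s }.

Lemma gmono S g tau : ctx S g tau -> forall j k, j < k -> k < size g ->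
  nth 0 g j < nth 0 g k.
Proof.
move=> C j k Hjk Hk; apply: (sorted_ltn_nth ltn_trans 0 (c_sorted C)) => //.
by rewrite inE (ltn_trans Hjk).
Qed.

Lemma gpos S g tau : ctx S g tau -> forall j, j < size g -> 0 < nth 0 g j.
Proof.
move=> C j Hj; have H0 : 0 < nth 0 g 0.
  rewrite lt0n; apply/negP => /eqP E; apply: (c_min C (leq_ltn_trans (leq0n j) Hj)).
  by rewrite E; exists (fun _ => 0); rewrite big1.
case: j Hj => // j Hj; apply: leq_trans H0 _; apply: ltnW; exact: gmono C _ _ _ Hj.
Qed.

Lemma S_genk S g tau : ctx S g tau -> forall x, S x <-> genk g (size g) x.
Proof. by move=> C x; rewrite (c_gen C) gen_genk. Qed.

Lemma Ap_unique S g tau : ctx S g tau -> 0 < size g -> forall u v,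
  Ap S g u -> Ap S g v -> u %% mult g = v %% mult g -> u = v.
Proof.
move=> C Hn.
have key : forall u v, u <= v -> Ap S g u -> Ap S g v -> u %% mult g = v %% mult g -> u = v.
  move=> u v Huv [Su _] [_ Hv] E.
  have : mult g %| v - u by rewrite -eqn_mod_dvd // E.
  case/dvdnP=> d Ed.
  case: d Ed => [|d] Ed; first by lia.
  exfalso; apply: Hv; split; first by lia.
  have -> : v - mult g = u + d * mult g by lia.
  apply/(S_genk C); apply: genk_add; first exact/(S_genk C).
  exact: genk_gen.
move=> u v Hu Hv E; case: (leqP u v) => H; first exact: key.
by apply/esym/key => //; apply: ltnW.
Qed.

Lemma Qlem S g tau : ctx S g tau -> forall k, k <= size g -> forall x, genk g k x ->
  exists q lam, (forall j, 0 < j < k -> lam j <= tau j) /\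
    x = q * mult g + \sum_(1 <= j < k) lam j * nth 0 g j.
Proof.
move=> C; elim=> [|k IH] Hk x Hx.
- by exists 0, (fun _ => 0); split => //; rewrite (genk0 Hx) big_geq.
- case: k IH Hk Hx => [|k] IH Hk Hx.
  + case: Hx => l ->; exists (l 0), (fun _ => 0); split => //.
    by rewrite big_nat1 big_geq // addn0.
  + case: Hx => l Ex.
    rewrite big_nat_recr //= in Ex.
    have Hy : genk g k.+1 (\sum_(0 <= j < k.+1) l j * nth 0 g j) by exists l.
    move: Ex Hy; move: (\sum_(0 <= j < k.+1) _) (l k.+1) => y c -> {x}.
    elim/ltn_ind: c y => c IHc y Hy.
    have Hk1 : 0 < k.+1 < size g by [].
    case: (leqP c (tau k.+1)) => Hc.
    * have [q [lam [Hb Ey]]] := IH (ltnW Hk) y Hy.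
      exists q, (fun j => if j == k.+1 then c else lam j); split.
      - move=> j /andP[H0 Hj]; case: eqP => [->//|/eqP Hne]; apply: Hb.
        by rewrite H0 /= ltn_neqAle Hne -ltnS.
      - rewrite big_nat_recr //= eqxx Ey -addnA; congr (_ + (_ + _)).
        by apply: eq_big_nat => j /andP[_ Hj]; rewrite ifN // neq_ltn Hj.
    * have [[cl Ecl] _] := c_tau C Hk1.
      have Hz : genk g k.+1 ((tau k.+1).+1 * nth 0 g k.+1).
        by apply/genk_take; [exact: ltnW | exists cl].
      have [q [lam [Hb E]]] := IHc (c - (tau k.+1).+1) ltac:(lia) _ (genk_add Hy Hz).
      exists q, lam; split => //; rewrite -E.
      have -> : c * nth 0 g k.+1 =
        (tau k.+1).+1 * nth 0 g k.+1 + (c - (tau k.+1).+1) * nth 0 g k.+1.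
        by rewrite -mulnDl subnKC.
      by rewrite addnA.
Qed.

Lemma Plem S g tau : ctx S g tau -> forall k t x, 0 < k < size g -> 0 < t <= tau k ->
  genk g k x -> (t * nth 0 g k) %% mult g = x %% mult g -> False.
Proof.
move=> C k t x Hk Ht Hx Emod.
case/andP: (Hk) => Hk0 Hkn; case/andP: Ht => Ht0 Htk.
have Hn : 0 < size g by apply: leq_ltn_trans Hkn.
have [q [lam [Hb Ex]]] := Qlem C (ltnW Hkn) Hx.
set b := \sum_(1 <= j < k) lam j * nth 0 g j in Ex.
have Apb : Ap S g b.
  apply/(c_box C); exists (fun j => if j < k then lam j else 0); split.
  - by move=> j /andP[H0 Hj]; case: ifP => // Hjk; apply: Hb; rewrite H0.
  - rewrite [RHS](big_cat_nat (n:=k)) //=; last exact: ltnW.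
    rewrite [X in _ = _ + X]sum0_nat ?addn0.
    + by apply: eq_big_nat => j /andP[_ ->].
    + by move=> j /andP[H _]; rewrite ltnNge H.
have Apt : Ap S g (t * nth 0 g k).
  apply/(c_box C); exists (fun j => if j == k then t else 0); split.
  - by move=> j _; case: eqP => [->//|_].
  - by rewrite sum_ind // Hk0 Hkn.
have Eb : t * nth 0 g k = b.
  by apply: (Ap_unique C Hn) => //; rewrite Emod Ex modnMDl.
have [_ Hmin] := c_tau C Hk.
have : (tau k).+1 <= t; last by rewrite ltnNge Htk.
apply: Hmin => //; apply/genk_take; first exact: ltnW.
rewrite Eb; exists (fun j => if j == 0 then 0 else lam j).
rewrite big_ltn // eqxx mul0n add0n; apply: eq_big_nat => j /andP[H0 _].
by rewrite ifN // -lt0n.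
Qed.

Lemma Clem S g tau : ctx S g tau -> forall i, 0 < i < size g -> forall K, K <= size g ->
  forall lam, tau i * nth 0 g i = \sum_(0 <= j < K) lam j * nth 0 g j ->
  \sum_(0 <= j < K) lam j <= tau i.
Proof.
move=> C i Hi; case/andP: (Hi) => Hi0 Hin.
have Hgp := gpos C; have [_ Hmini] := c_tau C Hi.
elim=> [|k IH] Hk lam E.
  by rewrite big_geq.
rewrite big_nat_recr //= in E; rewrite big_nat_recr //=.
set rest := \sum_(0 <= j < k) lam j * nth 0 g j in E.
have Hrest : genk g k rest by exists lam.
have Hkn : k < size g := Hk.
case: (posnP (lam k)) => Hl.
  rewrite Hl addn0; apply: IH (ltnW Hk) _ _; by rewrite E Hl mul0n addn0.
have gk := Hgp k Hkn.
case: (ltngtP k i) => Hki.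
- exfalso.
  have : (tau i).+1 <= tau i; last by rewrite ltnn.
  apply: Hmini.
  + case: (posnP (tau i)) => // Ht0; move: E; rewrite Ht0 mul0n => E.
    have : 0 < lam k * nth 0 g k by rewrite muln_gt0 Hl gk.
    move=> H; lia.
  + apply/genk_take; first exact: ltnW.
    rewrite E; apply: (genk_mono (Hki : k.+1 <= i)); apply: genk_add.
    * exact: genk_mono (leqnSn k) Hrest.
    * exact: genk_gen.
- set T := tau k.
  have Hk' : 0 < k < size g by rewrite Hkn andbT (leq_ltn_trans _ Hki).
  have [[cl0 Ecl0] _] := c_tau C Hk'.
  have HC : genk g k (T.+1 * nth 0 g k).
    by apply/genk_take; [exact: ltnW | exists cl0].
  case: (HC) => cl Ecl.
  have Hcl : T.+1 <= \sum_(0 <= j < k) cl j.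
    rewrite -(leq_pmul2r gk) Ecl big_distrl /= big_seq_cond [X in _ <= X]big_seq_cond.
    apply: leq_sum => j /andP[]; rewrite mem_index_iota => /andP[_ Hj] _.
    by rewrite leq_mul2l (ltnW (gmono C Hj Hkn)) orbT.
  have Hdiv := divn_eq (lam k) T.+1.
  set q := lam k %/ T.+1 in Hdiv; set r := lam k %% T.+1 in Hdiv.
  case: (posnP r) => Hr.
  + pose lam' j := lam j + q * cl j.
    have Esum : \sum_(0 <= j < k) lam' j * nth 0 g j = rest + q * (T.+1 * nth 0 g k).
      rewrite /lam' Ecl big_distrr -big_split /=.
      by apply: eq_bigr => j _; rewrite mulnDl mulnA.
    have Hlen : \sum_(0 <= j < k) lam' j = \sum_(0 <= j < k) lam j + q * \sum_(0 <= j < k) cl j.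
      by rewrite /lam' big_split /= big_distrr.
    have := IH (ltnW Hk) lam'.
    rewrite Esum Hlen.
    have Hq : q * T.+1 <= q * \sum_(0 <= j < k) cl j by rewrite leq_mul2l Hcl orbT.
    move: Hdiv; rewrite Hr addn0 => Hdiv.
    rewrite E Hdiv mulnA => /(_ erefl) H.
    by apply: leq_trans H; rewrite leq_add2l.
  + exfalso.
    set Y := q * (T.+1 * nth 0 g k) + rest.
    have EY : tau i * nth 0 g i = r * nth 0 g k + Y.
      by rewrite E Hdiv /Y mulnDl mulnA; lia.
    have m0 : 0 < mult g by apply: Hgp; apply: leq_ltn_trans Hkn.
    apply: (Plem C Hk' (t := r) (x := tau i * nth 0 g i + (mult g - 1) * Y)).
    + by rewrite Hr /= -ltnS ltn_mod.
    + apply: genk_add; first exact: genk_gen.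
      by apply: genk_mul; apply: genk_add => //; apply: genk_mul.
    + have -> : tau i * nth 0 g i + (mult g - 1) * Y = Y * mult g + r * nth 0 g k.
        rewrite EY mulnBl mul1n mulnC; nia.
      by rewrite modnMDl.
- subst k.
  have Hle : lam i <= tau i by rewrite -(leq_pmul2r gk) E leq_addl.
  case: (ltnP (lam i) (tau i)) => Hlt.
  + exfalso.
    have : (tau i).+1 <= tau i - lam i; last by rewrite ltnNge leq_subr.
    apply: Hmini; first by rewrite subn_gt0.
    apply/genk_take; first exact: ltnW.
    by rewrite mulnBl E addnK.
  + have Eq : lam i = tau i by apply/eqP; rewrite eqn_leq Hle Hlt.
    have Hr0 : rest = 0.
      by move: E; rewrite Eq -{1}[tau i * nth 0 g i]add0n => /eqP; rewrite eqn_add2r => /eqP.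
    have := sum_le_mul (a := 0) (b := i) lam (F := fun j => nth 0 g j).
    rewrite -/rest Hr0 leqn0 => /(_ _)/eqP -> ; first by rewrite add0n Eq.
    by move=> j /andP[_ Hj]; apply: Hgp; apply: ltn_trans Hin.
Qed.

Lemma sum_ind1 a b i c : a <= i < b ->
  \sum_(a <= j < b) (if j == i then c else 0) = c.
Proof.
move=> Hi; rewrite -[RHS]muln1 -(sum_ind c (fun _ => 1) Hi).
by apply: eq_big_nat => j _; rewrite muln1.
Qed.

Lemma part1 S g : numerical_semigroup S -> min_gens S g -> telescopic S g ->
  beta_rectangular S g.
Proof.
move=> _ [Hs Hg Hm] [tau [Ht Hb]].
have C : ctx S g tau by constructor.
exists tau; split => // i Hi.
case/andP: (Hi) => Hi0 Hin.
have Hgp := gpos C.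
have Ap_i : Ap S g (tau i * nth 0 g i).
  apply/Hb; exists (fun j => if j == i then tau i else 0); split.
  - by move=> j _; case: eqP => [->|].
  - by rewrite sum_ind // Hi0 Hin.
split.
- split => //; split.
  + exists (fun j => if j == i then tau i else 0); split.
    * rewrite /is_rep -(big_mkord xpredT (fun j => (if j == i then tau i else 0) * nth 0 g j)).
      by rewrite sum_ind.
    * rewrite /rep_len -(big_mkord xpredT (fun j => if j == i then tau i else 0)).
      by rewrite sum_ind1.
  + move=> lam; rewrite /is_rep /rep_len -(big_mkord xpredT (fun j => lam j * nth 0 g j)).
    rewrite -(big_mkord xpredT lam) => E.
    exact: (Clem C Hi (leqnn _)).
- move=> h Haph [_ Hordh].
  case: (leqP h (tau i)) => // Hh; exfalso.
  have [[cl0 Ecl0] _] := Ht i Hi.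
  have HC : genk g i ((tau i).+1 * nth 0 g i).
    by apply/genk_take; [exact: ltnW | exists cl0].
  case: HC => cl Ecl.
  pose lam j := if j < i then cl j else if j == i then h - (tau i).+1 else 0.
  have Hi' : 0 <= i < size g by rewrite Hin.
  have Erep : is_rep g lam (h * nth 0 g i).
    rewrite /is_rep -(big_mkord xpredT (fun j => lam j * nth 0 g j)) (sum_split3 _ Hi').
    rewrite {2}/lam ltnn eqxx [X in _ = _ + X]sum0_nat ?addn0.
    + rewrite (@eq_big_nat _ 0 addn 0 i _ (fun j => cl j * nth 0 g j)); last first.
        by move=> j /andP[_ Hj]; rewrite /lam Hj.
      by rewrite -Ecl -mulnDl subnKC.
    + move=> j /andP[Hj _]; rewrite /lam ltnNge (ltnW Hj) /= ifN //.
      by rewrite neq_ltn Hj orbT.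
  have := Hordh lam Erep.
  rewrite /rep_len -(big_mkord xpredT lam) (sum_split3 _ Hi').
  rewrite {2}/lam ltnn eqxx [X in _ + X <= _]sum0_nat ?addn0; last first.
    move=> j /andP[Hj _]; rewrite /lam ltnNge (ltnW Hj) /= ifN //.
    by rewrite neq_ltn Hj orbT.
  rewrite (@eq_big_nat _ 0 addn 0 i _ (cl)); last by move=> j /andP[_ Hj]; rewrite /lam Hj.
  move=> Hlen.
  have Hcl : \sum_(0 <= j < i) cl j <= (tau i).+1 by lia.
  have Hsum : \sum_(0 <= j < i) cl j * nth 0 g j <=
              (\sum_(0 <= j < i) cl j) * (nth 0 g i - 1).
    rewrite big_distrl /= big_seq_cond [X in _ <= X]big_seq_cond.
    apply: leq_sum => j /andP[]; rewrite mem_index_iota => /andP[_ Hj] _.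
    rewrite leq_mul2l; apply/orP; right.
    have := gmono C Hj Hin; lia.
  have gi := Hgp i Hin.
  move: Hsum; rewrite -Ecl => Hsum.
  have : (\sum_(0 <= j < i) cl j) * (nth 0 g i - 1) <= (tau i).+1 * (nth 0 g i - 1).
    by rewrite leq_mul2r Hcl orbT.
  nia.
Qed.

Lemma gen3E s : gen [:: 4; 5; 6] s <-> exists a b c, s = a * 4 + b * 5 + c * 6.
Proof.
split.
- case=> lam ->; exists (lam 0), (lam 1), (lam 2).
  by rewrite !big_ord_recl big_ord0 addn0 addnA.
- case=> a [b [c ->]]; exists (fun i => nth 0 [:: a; b; c] i).
  by rewrite !big_ord_recl big_ord0 addn0 addnA.
Qed.

Lemma box3E d s : box [:: 4; 5; 6] d s <->
  exists l1 l2, l1 <= d 1 /\ l2 <= d 2 /\ s = l1 * 5 + l2 * 6.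
Proof.
rewrite /box; split.
- case=> lam [H ->]; exists (lam 1), (lam 2).
  rewrite big_ltn // big_ltn // big_geq // addn0; split; first exact: H.
  by split; first exact: H.
- case=> l1 [l2 [H1 [H2 ->]]]; exists (fun i => nth 0 [:: 0; l1; l2] i).
  rewrite big_ltn // big_ltn // big_geq // addn0; split=> // i /andP[].
  by case: i => [|[|[|i]]].
Qed.
Lemma Ap3E s : Ap (gen [:: 4; 5; 6]) [:: 4; 5; 6] s <->
  exists l1 l2, l1 <= 1 /\ l2 <= 1 /\ s = l1 * 5 + l2 * 6.
Proof.
rewrite /Ap /mult !gen3E; change (nth 0 [:: 4; 5; 6] 0) with 4; split.
- case=> [[a [b [c Hs]]] H].
  have Ha : a = 0.
    case: a Hs => // a Hs; case: H; split; first by lia.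
    by exists a, b, c; lia.
  have Hb : b <= 1.
    case: b Hs => [|[|b]] Hs //; case: H; split; first by lia.
    by exists a, b, c.+1; lia.
  have Hc : c <= 1.
    case: c Hs => [|[|c]] Hs //; case: H; split; first by lia.
    by exists (a.+2), b, c; lia.
  by exists b, c; lia.
- case=> l1 [l2 [H1 [H2 ->]]]; split; first by exists 0, l1, l2; lia.
  case=> H4 [a [b [c E]]]; lia.
Qed.

Lemma part2 : let S := gen [:: 4; 5; 6] in
   [/\ numerical_semigroup S, min_gens S [:: 4; 5; 6],
       alpha_rectangular S [:: 4; 5; 6], beta_rectangular S [:: 4; 5; 6]
     & ~ telescopic S [:: 4; 5; 6]].
Proof.
move=> S.
have HAp : forall s, Ap S [:: 4; 5; 6] s <-> box [:: 4; 5; 6] (fun _ => 1) s.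
  by move=> s; rewrite Ap3E box3E.
have Hmax : forall i h, 0 < i < 3 -> Ap S [:: 4; 5; 6] (h * nth 0 [:: 4; 5; 6] i) -> h <= 1.
  move=> [|[|[|i]]] h // _; rewrite Ap3E => -[l1 [l2 [H1 [H2 E]]]]; move: E => /= E; lia.
have HAp1 : forall i, 0 < i < 3 -> Ap S [:: 4; 5; 6] (1 * nth 0 [:: 4; 5; 6] i).
  move=> [|[|[|i]]] // _; rewrite Ap3E.
  - by exists 1, 0.
  - by exists 0, 1.
split.
- split; first by apply/gen3E; exists 0, 0, 0.
  + move=> a b; rewrite /S !gen3E => -[a1 [b1 [c1 ->]]] [a2 [b2 [c2 ->]]].
    by exists (a1 + a2), (b1 + b2), (c1 + c2); lia.
  + exists 8; rewrite /S => n; elim: n {-2}n (leqnn n) => [|N IH] n Hn Hn8.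
    * lia.
    * apply/gen3E.
      case: (ltnP n 12) => Hn12.
      - have : (n = 8) \/ (n = 9) \/ (n = 10) \/ (n = 11) by lia.
        case=> [->|[->|[->|->]]].
        + by exists 2, 0, 0.
        + by exists 1, 1, 0.
        + by exists 1, 0, 1.
        + by exists 0, 1, 1.
      - have := IH (n - 4) ltac:(lia) ltac:(lia); rewrite gen3E.
        case=> a [b [c E]]; exists a.+1, b, c; lia.
- split => //.
  move=> [|[|[|i]]] // _; case=> lam.
  + rewrite !big_ord_recl big_ord0; move=> /= ; lia.
  + rewrite !big_ord_recl big_ord0; move=> /= ; lia.
  + rewrite !big_ord_recl big_ord0; move=> /= ; lia.
- exists (fun _ => 1); split => // i Hi; split; first exact: HAp1.
  by move=> h; apply: Hmax.
- exists (fun _ => 1); split => // i Hi; split.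
  + split; first exact: HAp1.
    split.
    * exists (fun j => if j == i then 1 else 0); rewrite /is_rep /rep_len.
      move: Hi; case: i => [|[|[|i]]] // _; 
        by rewrite !big_ord_recl big_ord0.
    * move=> lam; rewrite /is_rep /rep_len.
      move: Hi; case: i => [|[|[|i]]] // _;
        rewrite !big_ord_recl !big_ord0 => E; rewrite /bump /= in E *; lia.
  + by move=> h H _; apply: Hmax H.
- case=> tau [Ht Hb].
  have [[lam E] Hmin] := Ht 1 isT.
  have H4 := Hmin 4 isT.
  have : tau 1 < 4.
    apply: H4; exists (fun _ => 5); by rewrite big_ord_recl big_ord0.
  move: E; rewrite big_ord_recl big_ord0 => E Hlt.
  have Ht3 : tau 1 = 3.
    move: E; change (nth 0 [:: 4; 5; 6] 1) with 5.
    change (nth 0 (take 1 [:: 4; 5; 6]) ord0) with 4. lia.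
  have : Ap S [:: 4; 5; 6] 15.
    apply/Hb/box3E; exists 3, 0; rewrite Ht3; by [].
  rewrite Ap3E => -[l1 [l2 [H1 [H2 E2]]]]; lia.
Qed.

Theorem mainTheorem7 :
  (forall (S : nat -> Prop) (g : seq nat),
      numerical_semigroup S -> min_gens S g ->
      telescopic S g -> beta_rectangular S g) /\
  (let S := gen [:: 4; 5; 6] in
   [/\ numerical_semigroup S, min_gens S [:: 4; 5; 6],
       alpha_rectangular S [:: 4; 5; 6], beta_rectangular S [:: 4; 5; 6]
     & ~ telescopic S [:: 4; 5; 6]]).
Proof.
split; [exact: part1 | exact: part2].
Qed.
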